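(* Let $m$ be a prime, let $F$ be a field containing a primitive $m$th root of unity, and let $K/F$ be a cyclic Galois extension of degree $m$. Then $K$ has a nonassociative cyclic extension of degree $m$.
   Context: Definition: if $A$ is a nonassociative division algebra (an algebra $A\neq 0$ in which left and right multiplication by every nonzero element are bijective) and $D\subseteq A$ an associative division subalgebra, $A$ is a nonassociative cyclic extension of $D$ of degree $m$ if $A$ is a free left $D$-module of rank $m$ and $\mathrm{Aut}(A)$ has a cyclic subgroup $G$ of order $m$ such that $H|_D=\mathrm{id}_D$ for all $H\in G$. *)

(* Defs.v *)
From HB Require Import structures.
From mathcomp Require Import all_boot all_order all_algebra all_fingroup all_solvable all_field.
Set Implicit Arguments. Unset Strict Implicit. Unset Printing Implicit Defensive.
Import GRing.Theory.
Local Open Scope ring_scope.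

Section NonassocAlgebras.
Variables (F : fieldType) (A : lmodType F) (mul : A -> A -> A).

Definition bilinear_mul : Prop :=
  (forall (a : F) (x y z : A), mul (a *: x + y) z = a *: mul x z + mul y z) /\
  (forall (a : F) (x y z : A), mul z (a *: x + y) = a *: mul z x + mul z y).

Definition nonassoc_division : Prop :=
  (exists x : A, x != 0) /\
  (forall a : A, a != 0 -> bijective (mul a) /\ bijective (fun x => mul x a)).

Definition is_algebra_aut (h : A -> A) : Prop :=
  [/\ forall (a : F) (x y : A), h (a *: x + y) = a *: h x + h y,
      forall x y : A, h (mul x y) = mul (h x) (h y)
    & bijective h].

(* (A, mul) is a nonassociative cyclic extension of degree m of the
   associative division subalgebra D = iota(K), K an extension field of F. *)
Definition nonassoc_cyclic_extension (K : fieldExtType F) (iota : K -> A)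
    (m : nat) : Prop :=
  [/\ bilinear_mul,
      nonassoc_division,
      [/\ forall (a : F) (x y : K), iota (a *: x + y) = a *: iota x + iota y,
          forall x y : K, iota (x * y) = mul (iota x) (iota y)
        & injective iota],
      (* A is a free left D-module of rank m (D acting by left multiplication) *)
      [/\ forall (x y : K) (v : A), mul (iota (x * y)) v = mul (iota x) (mul (iota y) v),
          forall v : A, mul (iota 1) v = v
        & exists b : 'I_m -> A,
            bijective (fun c : {ffun 'I_m -> K} => \sum_(i < m) mul (iota (c i)) (b i))]
    & (* Aut(A) has a cyclic subgroup of order m, i.e. one generated by an
         automorphism h of order m, all of whose elements fix D pointwise *)
      exists h : A -> A,
        [/\ is_algebra_aut h,
            forall x : K, h (iota x) = iota x,
            forall v : A, iter m h v = v
          & forall k : nat, (0 < k < m)%N -> exists v : A, iter k h v <> v]].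

End NonassocAlgebras.

(* Main.v *)
Set Warnings "-notation-overridden -ambiguous-paths -notation-incompatible-prefix".
Require Import Defs.
From HB Require Import structures.
From mathcomp Require Import all_boot all_order all_algebra all_fingroup all_solvable all_field.
From mathcomp Require Import zify.
Set Implicit Arguments. Unset Strict Implicit. Unset Printing Implicit Defensive.
Import GRing.Theory.
Local Open Scope ring_scope.

Section Idx.
Variable n : nat.
Local Notation N := n.+2.
Lemma valD (x y : 'I_N) : val (x + y) = if (x + y < N)%N then (x + y)%N else (x + y - N)%N.
Proof.
rewrite /= /Zp_add /=; case: ltnP => h; first by rewrite modn_small.
have e : (x + y = (x + y - N) + N)%N by rewrite subnK.
rewrite [in LHS]e modnDr modn_small //.
have := ltn_ord x; have := ltn_ord y. lia.
Qed.
Lemma valN (y : 'I_N) : val (- y) = if y == 0%N :> nat then 0%N else (N - y)%N.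
Proof.
rewrite /= /Zp_opp /=; case: eqP => h; first by rewrite h modnn.
rewrite modn_small //; move: (ltn_ord y) h; move: (nat_of_ord y) => k; lia.
Qed.
Lemma valB (x y : 'I_N) : val (x - y) = if (y <= x)%N then (x - y)%N else (x + N - y)%N.
Proof.
rewrite valD valN /=; move: (ltn_ord x) (ltn_ord y).
case: eqP => h; rewrite ?h /=.
  move=> hx _; rewrite addn0 subn0 hx; done.
move: (nat_of_ord x) (nat_of_ord y) h => x' y' h.
move=> hx hy; case: (ltnP (x' + (N - y')) N); case: (leqP y' x'); lia.
Qed.
End Idx.

Lemma size_prod_bound (R : idomainType) (I : finType) (f : I -> {poly R}) :
  (size (\prod_i f i)%R <= (\sum_i (size (f i)).-1).+1)%N.
Proof.
apply: (big_rec2 (fun (p : {poly R}) S => (size p <= S.+1)%N)) => [|i p S _ IH].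
  by rewrite size_poly1.
apply: (leq_trans (size_polyMleq _ _)).
move: IH; move: (size p) (size (f i)) => a [|b] /=; lia.
Qed.

Section Main.
Variables (F : fieldType) (K : splittingFieldType F) (n : nat).
Local Notation m := n.+2.
Variable s : gal_of {:K}.
Hypothesis sm : (s ^+ m)%g = 1%g.
Definition sp (i : nat) (x : K) : K := (s ^+ i)%g x.

Lemma spS i x : sp i.+1 x = s (sp i x).
Proof. by rewrite /sp expgSr galM ?memvf. Qed.
Lemma sp0 x : sp 0 x = x.
Proof. by rewrite /sp expg0 gal_id. Qed.
Lemma spmod i x : sp (i %% m) x = sp i x.
Proof. by rewrite /sp expg_mod. Qed.
Lemma spM i x y : sp i (x * y) = sp i x * sp i y.
Proof. by rewrite /sp rmorphM. Qed.
Lemma spD i x y : sp i (x + y) = sp i x + sp i y.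
Proof. by rewrite /sp rmorphD. Qed.
Lemma spZ i (c : F) x : sp i (c *: x) = c *: sp i x.
Proof. by rewrite /sp linearZ. Qed.
Lemma sp_eq0 i x : (sp i x == 0) = (x == 0).
Proof. by rewrite /sp fmorph_eq0. Qed.
Lemma sp1 i : sp i 1 = 1.
Proof. by rewrite /sp rmorph1. Qed.

Definition Qm (y : 'I_m -> K) : 'M[{poly K}]_m :=
  \matrix_(i, k) ((sp i (y (k - i)))%:P * 'X^(k < i)).

Lemma size_Qentry y (i k : 'I_m) : ((size (Qm y i k)).-1 <= (i != 0 :> nat))%N.
Proof.
rewrite mxE; case: (eqVneq (sp i (y (k - i))) 0) => [->|nz]; first by rewrite mul0r size_poly0.
rewrite size_mulXn ?polyC_eq0 // size_polyC nz addn1 /=.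
by case: ltnP => //= h; case: eqP => // ei; move: h; rewrite ei.
Qed.

Lemma size_detQ y : (size (\det (Qm y)) <= m)%N.
Proof.
rewrite /determinant; apply: (leq_trans (size_sum _ _ _)).
apply/bigmax_leqP => p _.
have H : (size (\prod_i Qm y i (p i))%R <= m)%N.
  apply: (leq_trans (size_prod_bound _)); rewrite ltnS.
  apply: (@leq_trans (\sum_(i < m) (i != 0 :> nat))%N).
    by apply: leq_sum => i _; apply: size_Qentry.
  rewrite big_ord_recl /= add0n; apply: (@leq_trans (\sum_(i < n.+1) 1)%N).
    by apply: leq_sum.
  by rewrite sum1_card card_ord.
by rewrite -signr_odd mulr_sign; case: ifP => _; rewrite ?size_polyN.
Qed.

Hypothesis sfix : forall c : K, s c = c -> c \in 1%VS.

Lemma val1 : val (1 : 'I_m) = 1%N.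
Proof. by []. Qed.

Lemma valS1 (i : 'I_m) : val (i + 1) = if (i < n.+1)%N then i.+1 else 0%N.
Proof.
rewrite valD val1 addn1; move: (ltn_ord i); move: (nat_of_ord i) => j hj.
case: ltnP => h1; case: ltnP => h2 //; lia.
Qed.

Definition r1 : 'S_m := perm (addIr (1 : 'I_m)).

Lemma det_shift (R : comRingType) (M : 'M[R]_m) :
  \det (\matrix_(i, k) M (i + 1) (k + 1)) = \det M.
Proof.
have -> : \matrix_(i, k) M (i + 1) (k + 1) = perm_mx r1 *m M *m perm_mx r1^-1.
  by rewrite -row_permE -col_permE; apply/matrixP => i k; rewrite !mxE !permE.
rewrite !det_mulmx !det_perm odd_permV mulrC mulrA -expr2 -signr_odd sqrr_sign.
by rewrite mul1r.
Qed.

Lemma detQ_over y : \det (Qm y) \is a polyOver 1%VS.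
Proof.
set c : 'rV[{poly K}]_m := \row_i 'X^(i == n.+1 :> nat).
have dc : \det (diag_mx c) != 0.
  by rewrite det_diag; apply/prodf_neq0 => i _; rewrite mxE expf_neq0 // polyX_eq0.
have E : map_mx (map_poly s) (Qm y) *m diag_mx c
       = diag_mx c *m \matrix_(i, k) Qm y (i + 1) (k + 1).
  apply/matrixP => i k; rewrite mul_mx_diag mul_diag_mx !mxE.
  rewrite rmorphM /= map_polyC map_polyXn /=.
  have -> : (k + 1 - (i + 1) = k - i :> 'I_m) by rewrite opprD addrACA subrr addr0.
  have -> : s (sp i (y (k - i))) = sp (nat_of_ord (i + 1)%R) (y (k - i)).
    rewrite -spS valS1; case: ltnP => // h1; have h2 := ltn_ord i.
    by rewrite -[in LHS]spmod (_ : (i.+1 = m)%N) ?modnn //; lia.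
  rewrite mulrCA -!mulrA -!exprD; congr (_ * 'X^_).
  move: (valS1 i) (valS1 k) => /= -> ->; move: (ltn_ord i) (ltn_ord k).
  move: (nat_of_ord i) (nat_of_ord k) => i' k' hi hk.
  case: (ltnP i' n.+1) => h1; case: (ltnP k' n.+1) => h2;
  case: (ltnP k' i') => h3; case: eqP => h4; case: eqP => h5; rewrite /=; try lia.
have inv : map_poly s (\det (Qm y)) = \det (Qm y).
  apply: (mulIf dc); rewrite -det_map_mx -det_mulmx E det_mulmx det_shift.
  by rewrite mulrC.
apply/polyOverP => j; apply: sfix.
by rewrite -coef_map inv.
Qed.

Lemma detQ0_neq0 y : y 0 != 0 -> \det (Qm y) != 0.
Proof.
move=> y0.
have : horner_eval 0 (\det (Qm y)) != 0.
  rewrite -det_map_mx -det_tr det_trig.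
    apply/prodf_neq0 => i _; rewrite !mxE /= horner_evalE subrr ltnn expr0 mulr1 hornerC.
    by rewrite sp_eq0.
  apply/is_trig_mxP => i j hij; rewrite !mxE /= horner_evalE hornerM_comm ?hornerXn ?hij.
    by rewrite expr1 mulr0.
  by rewrite /comm_poly mulr0 mul0r.
by apply: contra => /eqP ->; rewrite rmorph0.
Qed.

Lemma detQ_neq0 y (d : 'I_m) : y d != 0 -> (forall j : 'I_m, (j < d)%N -> y j = 0) ->
  \det (Qm y) != 0.
Proof.
move=> yd ylt.
pose y' (j : 'I_m) := if (j + d < m)%N then y (inord (j + d)) else 0.
pose r : 'S_m := perm (addIr d).
pose cS : 'rV[{poly K}]_m := \row_l 'X^((l + d)%R < l)%N.
have rV k : r^-1%g k = k - d.
  have e : r (k - d) = k by rewrite permE subrK.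
  by rewrite -{1}e permK.
have E : Qm y = Qm y' *m (diag_mx cS *m perm_mx r).
  apply/matrixP => i k.
  have cp (A : 'M[{poly K}]_m) : A *m perm_mx r = col_perm r^-1 A by rewrite col_permE invgK.
  rewrite mulmxA cp mul_mx_diag !mxE rV.
  rewrite subrK -mulrA -exprD (addrAC k (- d) (- i)) /y'.
  have hjd := valB (k - i) d.
  case: (leqP d (k - i)%R) => h.
    rewrite hjd h subnK // ltn_ord inord_val; congr (_ * 'X^_).
    move: h; rewrite !valB; move: (ltn_ord k) (ltn_ord i) (ltn_ord d).
    move: (nat_of_ord k) (nat_of_ord i) (nat_of_ord d) => k' i' d' hk hi hd.
    case: (leqP i' k') => h1; case: (leqP d' k') => h2 h3; lia.
  rewrite ylt // hjd (leqNgt d) h /= (_ : ((k - i)%R + m - d + d < m)%N = false).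
    by rewrite /sp !rmorph0 !mul0r.
  apply/negbTE; rewrite -leqNgt; move: h (ltn_ord (k - i)).
  move: (nat_of_ord (k - i)) => j'; lia.
rewrite E det_mulmx mulf_neq0 //.
  by apply: detQ0_neq0; rewrite /y' add0n ltn_ord inord_val.
rewrite det_mulmx det_perm mulf_neq0 ?signr_eq0 //.
by rewrite det_diag; apply/prodf_neq0 => i _; rewrite mxE expf_neq0 // polyX_eq0.
Qed.

Variable a : K.
Hypothesis ha : size (minPoly 1%VS a) = m.+1.

Definition Mq (y : 'I_m -> K) : 'M[K]_m := \matrix_(i, k) (sp i (y (k - i)) * a ^+ (k < i)).

Lemma detM_neq0 y (d : 'I_m) : y d != 0 -> (forall j : 'I_m, (j < d)%N -> y j = 0) ->
  \det (Mq y) != 0.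
Proof.
move=> yd ylt.
have <- : (\det (Qm y)).[a] = \det (Mq y).
  rewrite -horner_evalE -det_map_mx; congr (\det _).
  by apply/matrixP => i k; rewrite !mxE /= rmorphM /= !horner_evalE hornerC hornerXn.
apply/negP => /eqP r0.
have dv := minPoly_dvdp (detQ_over y) (introT eqP r0).
have := dvdp_leq (detQ_neq0 yd ylt) dv; rewrite ha.
by move=> h2; have := leq_trans h2 (size_detQ y); rewrite ltnn.
Qed.

Definition cmul (p q : {ffun 'I_m -> K}) : {ffun 'I_m -> K} :=
  [ffun k => \sum_(i < m) p i * sp i (q (k - i)) * a ^+ (k < i)].

Lemma cmul_row p q : \row_k (cmul p q k) = \row_i p i *m Mq q.
Proof. by apply/matrixP => i k; rewrite !mxE ffunE; apply: eq_bigr => j _; rewrite !mxE mulrA. Qed.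

Lemma cmul_eq0 p q : cmul p q = 0 -> q != 0 -> p = 0.
Proof.
move=> e0 qn0.
have [j qj] : exists j, q j != 0.
  apply/existsP; apply: contraR qn0 => /existsPn h; apply/eqP/ffunP => j.
  by rewrite ffunE; apply/eqP; move: (h j); rewrite negbK.
pose P k := (k < m)%N && (q (inord k) != 0).
have exP : exists k, P k by exists j; rewrite /P ltn_ord inord_val.
case: (ex_minnP exP) => d /andP[dm qd] dmin.
have hu : Mq q \in unitmx.
  rewrite unitmxE unitfE; apply: (detM_neq0 qd) => i hi.
  case: (eqVneq (q i) 0) => // qi; have := dmin i; rewrite /P ltn_ord inord_val qi /=.
  move=> /(_ isT); move: hi; rewrite inordK //; lia.
have r0 : \row_i p i = 0.
  rewrite -[\row_i p i](mulmxK hu) -cmul_row e0 (_ : \row_k (0 : {ffun 'I_m -> K}) k = 0) ?mul0mx //.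
  by apply/matrixP => i k; rewrite !mxE ffunE.
apply/ffunP => i; have := congr1 (fun M : 'rV_m => M 0 i) r0; rewrite !mxE ffunE; done.
Qed.

Definition iota (x : K) : {ffun 'I_m -> K} := [ffun i => if i == 0 then x else 0].

Lemma cmul_iota x v : cmul (iota x) v = [ffun k => x * v k].
Proof.
apply/ffunP => k; rewrite !ffunE (bigD1 ord0) //= big1 => [|i ni].
  by rewrite ffunE eqxx sp0 subr0 expr0 mulr1 addr0.
by rewrite ffunE (negbTE ni) !mul0r.
Qed.

Lemma iotaM x y : iota (x * y) = cmul (iota x) (iota y).
Proof. by rewrite cmul_iota; apply/ffunP => k; rewrite !ffunE; case: eqP; rewrite ?mulr0. Qed.

Lemma iotaL (c : F) x y : iota (c *: x + y) = c *: iota x + iota y.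
Proof. by apply/ffunP => k; rewrite !ffunE; case: eqP; rewrite ?scaler0 ?addr0. Qed.

Lemma iota_inj : injective iota.
Proof. by move=> x y /ffunP /(_ 0); rewrite !ffunE eqxx. Qed.

Lemma cmulLl (c : F) p q r : cmul (c *: p + q) r = c *: cmul p r + cmul q r.
Proof.
apply/ffunP => k; rewrite !ffunE scaler_sumr -big_split; apply: eq_bigr => i _.
by rewrite !ffunE !mulrDl -!scalerAl.
Qed.

Lemma ffLE (c : F) (p q : {ffun 'I_m -> K}) x : (c *: p + q) x = c *: p x + q x.
Proof. by rewrite !ffunE. Qed.

Lemma cmulLr (c : F) p q r : cmul r (c *: p + q) = c *: cmul r p + cmul r q.
Proof.
apply/ffunP => k; rewrite !ffunE scaler_sumr -big_split; apply: eq_bigr => i _.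
by rewrite ffLE spD spZ !mulrDr !mulrDl -scalerAr -scalerAl.
Qed.

Lemma cmul_nzd p q : p != 0 -> q != 0 -> cmul p q != 0.
Proof. by move=> pn qn; apply/eqP => e; move/eqP: pn; apply; apply: cmul_eq0 e qn. Qed.

Variable w : F.
Hypothesis wprim : m.-primitive_root w.

Definition Hh (v : {ffun 'I_m -> K}) : {ffun 'I_m -> K} := [ffun i : 'I_m => (w ^+ i) *: v i].

Lemma modk (i k : 'I_m) : ((i + (k - i)%R) %% m)%N = k.
Proof.
rewrite valB; move: (ltn_ord i) (ltn_ord k); move: (nat_of_ord i) (nat_of_ord k) => i' k' hi hk.
case: leqP => h.
  by rewrite subnKC // modn_small.
by rewrite addnC subnK ?modnDr ?modn_small //; lia.
Qed.

Lemma Hh_mul p q : Hh (cmul p q) = cmul (Hh p) (Hh q).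
Proof.
apply/ffunP => k; rewrite !ffunE scaler_sumr; apply: eq_bigr => i _.
rewrite /Hh !ffunE spZ -!scalerAl -scalerAr -scalerAl scalerA -exprD.
by rewrite -(expr_mod (i + _)%N (prim_expr_order wprim)) modk.
Qed.

Lemma Hh_lin (c : F) x y : Hh (c *: x + y) = c *: Hh x + Hh y.
Proof. by apply/ffunP => k; rewrite !ffunE scalerDr !scalerA mulrC. Qed.

Lemma w_neq0 : w != 0.
Proof.
apply/eqP => w0; have := prim_expr_order wprim; rewrite w0 expr0n /= => /eqP.
by rewrite eq_sym oner_eq0.
Qed.

Lemma Hh_inj : injective Hh.
Proof.
move=> x y /ffunP e; apply/ffunP => i; have := e i; rewrite !ffunE.
by move/(congr1 ( *:%R (w ^+ i)^-1)); rewrite !scalerK // expf_neq0 // w_neq0.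
Qed.

Lemma iter_Hh k v : iter k Hh v = [ffun i : 'I_m => (w ^+ i) ^+ k *: v i].
Proof.
elim: k => [|k IH]; first by apply/ffunP => i; rewrite ffunE expr0 scale1r.
by rewrite iterS IH; apply/ffunP => i; rewrite !ffunE scalerA exprS.
Qed.

Lemma iter_Hh_m v : iter m Hh v = v.
Proof. by rewrite iter_Hh; apply/ffunP => i; rewrite ffunE exprAC (prim_expr_order wprim) expr1n scale1r. Qed.

Lemma iter_Hh_nt k : (0 < k < m)%N -> exists v, iter k Hh v <> v.
Proof.
move=> /andP[k0 km]; exists [ffun i : 'I_m => if i == 1 then (1 : K) else 0].
rewrite iter_Hh => /ffunP /(_ 1); rewrite !ffunE eqxx.
rewrite -[X in _ = X](scale1r (1 : K)) val1 expr1 => /(fmorph_inj (in_alg K)) /eqP.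
by rewrite -(prim_order_dvd wprim) => /dvdn_leq => /(_ k0); rewrite leqNgt km.
Qed.

Lemma Hh_iota x : Hh (iota x) = iota x.
Proof. by apply/ffunP => i; rewrite !ffunE; case: eqP => [->|]; rewrite ?expr0 ?scale1r ?scaler0. Qed.

Lemma cmulBr r p q : cmul r (p - q) = cmul r p - cmul r q.
Proof. by rewrite -[p - q]addrC -scaleN1r cmulLr scaleN1r addrC. Qed.

Lemma cmulBl r p q : cmul (p - q) r = cmul p r - cmul q r.
Proof. by rewrite -[p - q]addrC -scaleN1r cmulLl scaleN1r addrC. Qed.

End Main.

Section Bij.
Variables (F : fieldType) (V : vectType F) (f : V -> V).
Hypothesis fL : forall (a : F) x y, f (a *: x + y) = a *: f x + f y.
Hypothesis finj : injective f.

Let fLin : linear f. Proof. by move=> a x y; rewrite fL. Qed.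
HB.instance Definition _ := GRing.isLinear.Build F V V *:%R f fLin.

Lemma inj_bij : bijective f.
Proof.
pose g := linfun f.
have gE : g =1 f by move=> x; rewrite lfunE.
have k0 : lker g == 0%VS by apply/lker0P => x y; rewrite !gE; apply: finj.
have im : limg g = fullv.
  apply/eqP; rewrite eqEdim subvf /= limg_dim_eq //.
  by rewrite (eqP k0) capv0.
exists (g^-1)%VF => x.
  by rewrite -gE lker0_lfunK.
by rewrite -gE limg_lfunVK // im memvf.
Qed.
End Bij.

Theorem corollary2p4 (F : fieldType) (K : splittingFieldType F) (m : nat) :
  prime m ->
  (exists w : F, m.-primitive_root w) ->
  galois 1%AS {:K} ->
  cyclic 'Gal({:K} / 1%AS) ->
  \dim {:K} = m ->
  exists (A : lmodType F) (mul : A -> A -> A) (iota : K -> A),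
    nonassoc_cyclic_extension mul iota m.
Proof.
move=> pm [w wprim] gal cyc dimK.
have [n mE] : exists n, m = n.+2 by exists m.-2; have := prime_gt1 pm; lia.
move: pm wprim dimK; rewrite mE => pm wprim dimK; clear mE.
case/cyclicP: cyc => s gen.
have sm : (s ^+ n.+2)%g = 1%g.
  have oS : #[s]%g = n.+2.
    by rewrite /order -gen -galois_dim // dimv1 divn1 dimK.
  by rewrite -oS expg_order.
have sfix : forall c : K, s c = c -> c \in 1%VS.
  move=> c sc; have fE := galois_fixedField gal.
  rewrite -fE; apply/(fixedFieldP (memvf c)) => x; rewrite gen => /cycleP [k ->].
  elim: k => [|k IH]; first by rewrite expg0 gal_id.
  by rewrite expgSr galM ?memvf // IH sc.
have [a na] : exists a : K, a \notin 1%VS.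
  case: (boolP (fullv <= (1%VS : {vspace K}))%VS) => [sub|/subvPn [a _ na]]; last by exists a.
  by have := dimvS sub; rewrite dimv1 dimK.
have ha : size (minPoly 1%VS a) = n.+3.
  rewrite size_minPoly; congr S.
  have dv : (\dim <<1; a>> %| n.+2)%N by rewrite -dimK; apply: field_dimS; apply: subvf.
  case/primeP: pm => _ /(_ _ dv) /orP [/eqP d1|/eqP d2].
    exfalso; move/negP: na; apply; rewrite -adjoin_deg_eq1 adjoin_degreeE dimv1 divn1 d1 //.
  by rewrite adjoin_degreeE dimv1 divn1 d2.
exists ({ffun 'I_n.+2 -> K} : lmodType F), (cmul s a), (@iota F K n).
split.
- by split => c x y z; [apply: cmulLl | apply: cmulLr].
- split.
    exists (iota n (1 : K)); apply/eqP => /ffunP /(_ 0); rewrite !ffunE eqxx => /eqP.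
    by rewrite oner_eq0.
  move=> p pn; split; apply: inj_bij.
  + by move=> c x y; apply: cmulLr.
  + move=> x y e; apply/eqP; apply/negPn/negP => nz0; have nz : x - y != 0 by rewrite subr_eq0.
    by have := cmul_nzd sm sfix ha pn nz; rewrite cmulBr e subrr eqxx.
  + by move=> c x y; apply: cmulLl.
  + move=> x y e; apply/eqP; apply/negPn/negP => nz0; have nz : x - y != 0 by rewrite subr_eq0.
    by have := cmul_nzd sm sfix ha nz pn; rewrite cmulBl e subrr eqxx.
- split.
  + by move=> c x y; apply: iotaL.
  + by move=> x y; apply: iotaM.
  + exact: (@iota_inj F K n).
- split.
  + by move=> x y v; rewrite !cmul_iota; apply/ffunP => k; rewrite !ffunE mulrA.
  + by move=> v; rewrite cmul_iota; apply/ffunP => k; rewrite !ffunE mul1r.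
  + exists (fun i : 'I_n.+2 => [ffun j : 'I_n.+2 => if j == i then (1 : K) else 0]).
    have E : forall c : {ffun 'I_n.+2 -> K},
        \sum_(i < n.+2) cmul s a (iota n (c i)) [ffun j : 'I_n.+2 => if j == i then (1 : K) else 0] = c.
      move=> c; apply/ffunP => k; rewrite sum_ffunE (bigD1 k) //= big1 => [|i ni].
        by rewrite cmul_iota !ffunE eqxx mulr1 addr0.
      by rewrite cmul_iota !ffunE (negbTE (introN eqP (fun e => (negP ni) (introT eqP (esym e))))) mulr0.
    by exists id => c; rewrite ?E.
- exists (@Hh F K n w); split.
  + split.
    * by move=> c x y; apply: Hh_lin.
    * by move=> x y; apply: Hh_mul.
    * apply: inj_bij; [by move=> c x y; apply: Hh_lin | exact: Hh_inj].
  + by move=> x; apply: Hh_iota.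
  + by move=> v; apply: iter_Hh_m.
  + by move=> k hk; apply: iter_Hh_nt.
Qed.
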